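(* Let $k\ge1$ be an integer and $a,b,c,d\ge0$. Let $S_1=\inf\{S(u,v):(u,v)\in H^1(\mathbb{R})\times H^1(\mathbb{R}),\ \widetilde P(u,v)=1\}$ and $\lambda_1=(S_1)^{\frac{k+1}{k}}$. Then $$\lambda_1=\frac{2k+2}{k}\,\omega_{\mathcal{N}},$$ where $\omega_{\mathcal{N}}=\inf_{(u,v)\in\mathcal{N}}I(u,v)$.
   Context: $H(u,v)=\frac{a}{2k+2}(u^{2k+2}+v^{2k+2})+\frac{b}{k+1}(uv)^{k+1}+\frac{c}{k}u^{k+2}v^k+\frac{d}{k}u^kv^{k+2}$; $S(u,v)=\int(u'^2+v'^2+u^2+v^2)dx$; $\widetilde P(u,v)=(2k+2)\int H(u,v)dx$; $I(u,v)=\frac12S(u,v)-\int H(u,v)dx$; $\mathcal{N}=\{(u,v)\in H^1\times H^1\setminus\{(0,0)\}:I'(u,v)(u,v)=0\}$. *)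

(* Defs.v *)
From HB Require Import structures.
From mathcomp Require Import all_boot all_order all_algebra.
From mathcomp Require Import all_classical all_reals all_analysis.
Set Implicit Arguments. Unset Strict Implicit. Unset Printing Implicit Defensive.
Import Order.TTheory GRing.Theory Num.Theory.
Import numFieldNormedType.Exports.
Local Open Scope classical_set_scope.
Local Open Scope ring_scope.

Section Defs.
Variable R : realType.
Local Notation mu := (@lebesgue_measure R).

Definition Rint (f : R -> R) : R := Rintegral mu setT f.

Definition L2 (f : R -> R) : Prop :=
  measurable_fun setT f /\ mu.-integrable setT (fun x => (f x ^+ 2)%:E).

Definition test_fun (phi : R -> R) : Prop :=
  (forall (n : nat) (x : R), derivable (derive1n n phi) x 1) /\
  (exists M : R, forall x, M < `|x| -> phi x = 0).

Definition weak_deriv (u g : R -> R) : Prop :=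
  forall phi, test_fun phi ->
    Rint (fun x => u x * derive1 phi x) = - Rint (fun x => g x * phi x).

Definition H1 (u du : R -> R) : Prop := L2 u /\ L2 du /\ weak_deriv u du.

Definition Hnl (k : nat) (a b c d : R) (u v : R) : R :=
  a / (2 * k.+1)%:R * (u ^+ (2 * k.+1) + v ^+ (2 * k.+1))
  + b / k.+1%:R * (u * v) ^+ k.+1
  + c / k%:R * (u ^+ k.+2 * v ^+ k)
  + d / k%:R * (u ^+ k * v ^+ k.+2).

Definition Sfun (u du v dv : R -> R) : R :=
  Rint (fun x => du x ^+ 2 + dv x ^+ 2 + u x ^+ 2 + v x ^+ 2).

Definition Ptil (k : nat) (a b c d : R) (u v : R -> R) : R :=
  (2 * k.+1)%:R * Rint (fun x => Hnl k a b c d (u x) (v x)).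

Definition Ifun (k : nat) (a b c d : R) (u du v dv : R -> R) : R :=
  Sfun u du v dv / 2 - Rint (fun x => Hnl k a b c d (u x) (v x)).

(* t |-> I((u,v) + t (u,v)); its derivative at 0 is I'(u,v)(u,v) *)
Definition Iray (k : nat) (a b c d : R) (u du v dv : R -> R) (t : R) : R :=
  Ifun k a b c d (fun x => u x + t * u x) (fun x => du x + t * du x)
                 (fun x => v x + t * v x) (fun x => dv x + t * dv x).

Definition Nehari (k : nat) (a b c d : R) (u du v dv : R -> R) : Prop :=
  H1 u du /\ H1 v dv /\
  ~ (\forall x \ae mu, u x = 0 /\ v x = 0) /\
  derivable (Iray k a b c d u du v dv) 0 1 /\
  derive1 (Iray k a b c d u du v dv) 0 = 0.

Definition S1 (k : nat) (a b c d : R) : R :=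
  inf [set s | exists u du v dv, H1 u du /\ H1 v dv /\
         Ptil k a b c d u v = 1 /\ s = Sfun u du v dv].

Definition omegaN (k : nat) (a b c d : R) : R :=
  inf [set s | exists u du v dv, Nehari k a b c d u du v dv /\
         s = Ifun k a b c d u du v dv].

Definition lambda1 (k : nat) (a b c d : R) : R :=
  S1 k a b c d `^ (k.+1%:R / k%:R).
End Defs.

(* Main.v *)
Require Import Defs.
From HB Require Import structures.
From mathcomp Require Import all_boot all_order all_algebra.
From mathcomp Require Import all_classical all_reals all_analysis.
From mathcomp Require Import measurable_realfun.
From mathcomp Require Import ring lra.
Set Implicit Arguments. Unset Strict Implicit. Unset Printing Implicit Defensive.
Import Order.TTheory GRing.Theory Num.Theory.
Import numFieldNormedType.Exports.
Local Open Scope classical_set_scope.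
Local Open Scope ring_scope.

Section Aux.
Variable R : realType.
Local Notation mu := (@lebesgue_measure R).
Local Notation RI := (@Defs.Rint R).

Lemma Rint_nonint (f : R -> R) : measurable_fun setT f ->
  ~ mu.-integrable setT (EFin \o f) -> RI f = 0.
Proof.
move=> mf nint; rewrite /Defs.Rint /Rintegral.
have mF : measurable_fun setT (EFin \o f) by exact/measurable_EFinP.
have H : (\int[mu]_(x in setT) (abse \o (EFin \o f)) x = +oo)%E.
  apply/eqP; rewrite eq_le leey /= leNgt; apply/negP => H; apply: nint.
  by apply/integrableP; split.
rewrite fune_abse ge0_integralD // in H; last 2 first.
  exact: measurable_funepos. exact: measurable_funeneg.
rewrite integralE.
have : (0 <= \int[mu]_(x in setT) (EFin \o f)^\- x)%E.
  by apply: integral_ge0 => x _; exact: funeneg_ge0.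
have : (0 <= \int[mu]_(x in setT) (EFin \o f)^\+ x)%E.
  by apply: integral_ge0 => x _; exact: funepos_ge0.
move: H.
move: (\int[mu]_(x in _) _ ^\+ x)%E (\int[mu]_(x in _) _ ^\- x)%E.
by move=> [p| |] [n| |] //.
Qed.

Lemma Rint_scale (f : R -> R) r : measurable_fun setT f ->
  RI (fun x => r * f x) = r * RI f.
Proof.
move=> mf.
have [->|r0] := eqVneq r 0.
  rewrite mul0r /Defs.Rint; under eq_Rintegral do rewrite mul0r.
  by rewrite Rintegral_cst // mul0r.
have [intf|intf] := pselect (mu.-integrable setT (EFin \o f)).
  by rewrite /Defs.Rint RintegralZl.
rewrite !Rint_nonint ?mulr0 //.

  exact: (measurable_funM (measurable_cst r) mf).
move=> irf; apply: intf.
have := integrableZl measurableT (r^-1) irf.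
apply: eq_integrable => // x _.
by rewrite /= -EFinM mulrA mulVf ?mul1r.
Qed.

Lemma poly_der (A B : R) n :
  derivable (fun t : R => (1 + t) ^+ 2 * A - (1 + t) ^+ n * B) 0 1 /\
  derive1 (fun t : R => (1 + t) ^+ 2 * A - (1 + t) ^+ n * B) 0 = 2 * A - n%:R * B.
Proof.
have -> : (fun t : R => (1 + t) ^+ 2 * A - (1 + t) ^+ n * B) =
   ((cst 1 + id) ^+ 2 * cst A - (cst 1 + id) ^+ n * cst B).
  by apply/funext => t; rewrite /= !fctE.
split; first by [].
rewrite derive1E derive_val /= !fctE.
by rewrite !addr0 !add0r expr1n !scaler0 !add0r !mulr1 expr1n ?mulr1 !scalerA /GRing.scale /= !mulr1 (mulrC A) (mulrC B).
Qed.

Lemma H1_meas (u du : R -> R) : H1 u du ->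
  measurable_fun setT u /\ measurable_fun setT du.
Proof. by move=> [[mu1 _] [[mdu _] _]]. Qed.

Lemma mfun_scale (f : R -> R) r : measurable_fun setT f ->
  measurable_fun setT (fun x => r * f x).
Proof. move=> mf; exact: (measurable_funM (measurable_cst r) mf). Qed.

Lemma mfun_add (f g : R -> R) : measurable_fun setT f -> measurable_fun setT g ->
  measurable_fun setT (fun x => f x + g x).
Proof. move=> mf mg; exact: (measurable_funD mf mg). Qed.

Lemma mfun_mul (f g : R -> R) : measurable_fun setT f -> measurable_fun setT g ->
  measurable_fun setT (fun x => f x * g x).
Proof. move=> mf mg; exact: (measurable_funM mf mg). Qed.

Lemma mfun_exp (f : R -> R) n : measurable_fun setT f ->
  measurable_fun setT (fun x => f x ^+ n).
Proof. move=> mf; exact: measurable_funX. Qed.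

Lemma Hnl_meas k a b c d (u v : R -> R) :
  measurable_fun setT u -> measurable_fun setT v ->
  measurable_fun setT (fun x => Hnl k a b c d (u x) (v x)).
Proof.
move=> mu1 mv; rewrite /Hnl.
apply: mfun_add; [apply: mfun_add; [apply: mfun_add|]|]; apply: mfun_scale.
- exact: (mfun_add (mfun_exp _ mu1) (mfun_exp _ mv)).
- exact: (mfun_exp _ (mfun_mul mu1 mv)).
- exact: (mfun_mul (mfun_exp _ mu1) (mfun_exp _ mv)).
- exact: (mfun_mul (mfun_exp _ mu1) (mfun_exp _ mv)).
Qed.

Lemma Hnl_hom k a b c d (s u v : R) :
  Hnl k a b c d (s * u) (s * v) = s ^+ (2 * k.+1) * Hnl k a b c d u v.
Proof.
have e1 : s ^+ (2 * k.+1) = s ^+ k * s ^+ k * s * s.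
  by rewrite -exprD -!exprSr mul2n -addnn addSn addnS.
rewrite /Hnl !exprMn e1 !exprS.
ring.
Qed.

Lemma der_meas (f : R -> R) : (forall x, derivable f x 1) ->
  measurable_fun setT f.
Proof.
move=> df; apply: continuous_measurable_fun => x.
exact/differentiable_continuous/derivable1_diffP.
Qed.

Lemma test_meas (phi : R -> R) : test_fun phi ->
  measurable_fun setT phi /\ measurable_fun setT (derive1 phi).
Proof.
move=> [dphi _]; split.
  by apply: der_meas => x; exact: (dphi 0%N x).
by apply: der_meas => x; have := dphi 1%N x; rewrite derive1n1.
Qed.

Lemma L2_scale (f : R -> R) s : L2 f -> L2 (fun x => s * f x).
Proof.
move=> [mf intf]; split; first exact: mfun_scale.
have := integrableZl measurableT (s ^+ 2) intf.
apply: eq_integrable => // x _.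
by rewrite /= -EFinM exprMn.
Qed.

Lemma H1_scale (u du : R -> R) s : H1 u du ->
  H1 (fun x => s * u x) (fun x => s * du x).
Proof.
move=> [Lu [Ldu wd]]; split; first exact: L2_scale.
split; first exact: L2_scale.
move=> phi tphi.
have [mphi mdphi] := test_meas tphi.
have [mu1 _] := Lu; have [mdu _] := Ldu.
rewrite /Defs.Rint; under eq_Rintegral do rewrite -mulrA.
under [in RHS]eq_Rintegral do rewrite -mulrA.
have := Rint_scale s (mfun_mul mu1 mdphi).
have := Rint_scale s (mfun_mul mdu mphi).
rewrite /Defs.Rint => -> ->.
by have := wd _ tphi; rewrite /Defs.Rint => ->; rewrite mulrN.
Qed.

Lemma Sint_meas (u du v dv : R -> R) : H1 u du -> H1 v dv ->
  measurable_fun setT (fun x => du x ^+ 2 + dv x ^+ 2 + u x ^+ 2 + v x ^+ 2).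
Proof.
move=> /H1_meas[mu1 mdu] /H1_meas[mv mdv].
exact: (mfun_add (mfun_add (mfun_add (mfun_exp _ mdu) (mfun_exp _ mdv))
  (mfun_exp _ mu1)) (mfun_exp _ mv)).
Qed.

Lemma S_scale (u du v dv : R -> R) s : H1 u du -> H1 v dv ->
  Sfun (fun x => s * u x) (fun x => s * du x) (fun x => s * v x) (fun x => s * dv x)
  = s ^+ 2 * Sfun u du v dv.
Proof.
move=> hu hv; rewrite /Sfun /Defs.Rint.
under eq_Rintegral do rewrite !exprMn -!mulrDr.
by have := Rint_scale (s ^+ 2) (Sint_meas hu hv); rewrite /Defs.Rint.
Qed.

Lemma J_scale k a b c d (u du v dv : R -> R) s : H1 u du -> H1 v dv ->
  RI (fun x => Hnl k a b c d (s * u x) (s * v x))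
  = s ^+ (2 * k.+1) * RI (fun x => Hnl k a b c d (u x) (v x)).
Proof.
move=> /H1_meas[mu1 _] /H1_meas[mv _]; rewrite /Defs.Rint.
under eq_Rintegral do rewrite Hnl_hom.
by have := Rint_scale (s ^+ (2 * k.+1)) (Hnl_meas k a b c d mu1 mv); rewrite /Defs.Rint.
Qed.

Lemma Iray_eq k a b c d (u du v dv : R -> R) : H1 u du -> H1 v dv ->
  Iray k a b c d u du v dv = fun t => (1 + t) ^+ 2 * (Sfun u du v dv / 2)
     - (1 + t) ^+ (2 * k.+1) * RI (fun x => Hnl k a b c d (u x) (v x)).
Proof.
move=> hu hv; apply/funext => t; rewrite /Iray.
have e (f : R -> R) : (fun x => f x + t * f x) = (fun x => (1 + t) * f x).
  by apply/funext => x; rewrite mulrDl mul1r.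
rewrite !e /Ifun (S_scale _ hu hv) (@J_scale k a b c d u du v dv (1 + t) hu hv).
by rewrite mulrA.
Qed.

Lemma Iray_der k a b c d (u du v dv : R -> R) : H1 u du -> H1 v dv ->
  derivable (Iray k a b c d u du v dv) 0 1 /\
  derive1 (Iray k a b c d u du v dv) 0 =
    Sfun u du v dv - (2 * k.+1)%:R * RI (fun x => Hnl k a b c d (u x) (v x)).
Proof.
move=> hu hv; rewrite Iray_eq //.
have [h1 h2] := poly_der (Sfun u du v dv / 2) (RI (fun x => Hnl k a b c d (u x) (v x))) (2 * k.+1).
split => //; rewrite h2; congr (_ - _).
by rewrite mulrC divfK // pnatr_eq0.
Qed.

Lemma S_ge0 (u du v dv : R -> R) : 0 <= Sfun u du v dv.
Proof.
apply: Rintegral_ge0 => x _.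
by rewrite !addr_ge0 // sqr_ge0.
Qed.

Lemma Hnl00 k (a b c d : R) : Hnl k a b c d 0 0 = 0.
Proof.
by have := Hnl_hom k a b c d 0 0 0; rewrite mul0r expr0n /= mul0r.
Qed.

Lemma ae0_J k (a b c d : R) (u v : R -> R) :
  measurable_fun setT u -> measurable_fun setT v ->
  (\forall x \ae mu, u x = 0 /\ v x = 0) ->
  RI (fun x => Hnl k a b c d (u x) (v x)) = 0.
Proof.
move=> mu1 mv hae; rewrite /Defs.Rint /Rintegral.
rewrite (ae_eq_integral (cst 0%E)) //.

- by rewrite integral0.
- exact: (proj2 (measurable_EFinP _ _) (Hnl_meas k a b c d mu1 mv)).
- have FF := ae_filter_ringOfSetsType (@lebesgue_measure R).
  move: hae; apply: filterS => x [-> ->] _.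
  by rewrite Hnl00.
Qed.

Lemma S_eq0 (u du v dv : R -> R) : H1 u du -> H1 v dv ->
  Sfun u du v dv = 0 -> \forall x \ae mu, u x = 0 /\ v x = 0.
Proof.
move=> hu hv S0.
have [[_ iu] [[_ idu] _]] := hu.
have [[_ iv] [[_ idv] _]] := hv.
set g := fun x => du x ^+ 2 + dv x ^+ 2 + u x ^+ 2 + v x ^+ 2.
have ig : mu.-integrable setT (EFin \o g).
  have := integrableD measurableT (integrableD measurableT
     (integrableD measurableT idu idv) iu) iv.
  by apply: eq_integrable => // x _; rewrite /g /= !EFinD.
have g0 x : 0 <= g x by rewrite /g !addr_ge0 // sqr_ge0.
have I0 : (\int[mu]_(x in setT) (EFin \o g) x = 0)%E.
  have fin := integrable_fin_num measurableT ig.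
  by rewrite -(fineK fin); move: S0; rewrite /Sfun /Defs.Rint /Rintegral => ->.
have : (\int[mu]_(x in setT) `|(EFin \o g) x| = 0)%E.
  rewrite -I0; apply: eq_integral => x _.
  by rewrite /= ger0_norm.
move/ae_eq_integral_abs => /(_ measurableT (measurable_int mu ig)) hg.
apply: filterS hg => x /(_ I) /= [] gx.
have hu2 : u x ^+ 2 = 0.
  apply/eqP; rewrite eq_le sqr_ge0 andbT.
  move: gx; rewrite /g.
  have := sqr_ge0 (du x); have := sqr_ge0 (dv x); have := sqr_ge0 (v x).
  lra.
have hv2 : v x ^+ 2 = 0.
  apply/eqP; rewrite eq_le sqr_ge0 andbT.
  move: gx; rewrite /g.
  have := sqr_ge0 (du x); have := sqr_ge0 (dv x); have := sqr_ge0 (u x).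
  lra.
by split; apply/eqP; rewrite -sqrf_eq0; apply/eqP.
Qed.

Lemma inf_img (A : set R) (C p : R) : 0 < C -> 0 < p ->
  (forall x, A x -> 0 <= x) ->
  inf ((fun x => C * x `^ p) @` A) = C * (inf A) `^ p.
Proof.
move=> C0 p0 A0.
have [[x0 Ax0]|nA] := pselect (A !=set0); last first.
  have -> : A = set0.
    by apply/seteqP; split => // x Ax; apply: nA; exists x.
  by rewrite image_set0 inf0 powR0 ?mulr0 // gt_eqF.
have lbA : has_lbound A by exists 0 => x /A0.
have iA0 : 0 <= inf A by apply: lb_le_inf; [exists x0|move=> x /A0].
have monoq (q x y : R) : 0 <= q -> 0 <= x -> x <= y -> x `^ q <= y `^ q.
  by move=> q0 x0' xy; apply: ge0_ler_powR => //; rewrite nnegrE (le_trans x0').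
have mono x y : 0 <= x -> x <= y -> x `^ p <= y `^ p by apply: monoq; exact: ltW.
have ne : nonempty ((fun x => C * x `^ p) @` A) by exists (C * x0 `^ p), x0.
have lbB : lbound ((fun x => C * x `^ p) @` A) 0.
  by move=> _ [x _ <-]; rewrite mulr_ge0 ?powR_ge0 // ltW.
have iB0 : 0 <= inf ((fun x => C * x `^ p) @` A) by apply: lb_le_inf.
apply/eqP; rewrite eq_le; apply/andP; split; last first.
  apply: lb_le_inf => // _ [x Ax <-].
  rewrite ler_pM2l // mono //.
  exact: ge_inf.
set m := inf _ in iB0 *.
have hm : forall x, A x -> m <= C * x `^ p.
  by move=> x Ax; apply: ge_inf; [exists 0|exists x].
have key : (m / C) `^ p^-1 <= inf A.
  apply: lb_le_inf; first by exists x0.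
  move=> x Ax.
  have h1 : m / C <= x `^ p by rewrite ler_pdivrMr // mulrC hm.
  have ip : 0 <= p^-1 by rewrite invr_ge0 ltW.
  have := monoq p^-1 _ _ ip (divr_ge0 iB0 (ltW C0)) h1.
  by rewrite -powRrM mulfV ?gt_eqF // powRr1 // A0.
have := mono _ _ (powR_ge0 _ _) key.
rewrite -powRrM mulVf ?gt_eqF // powRr1; last exact: divr_ge0 iB0 (ltW C0).
move=> h; have := ler_wpM2l (ltW C0) h.
by rewrite [C * (m / C)]mulrC divfK // gt_eqF.
Qed.

Lemma natn2 k : (2 * k.+1)%:R = 2 * (k%:R + 1) :> R.
Proof. by rewrite natrM -[k.+1]addn1 natrD. Qed.

Lemma pow_nat_powR (r : R) (m : nat) (q : R) : 0 <= r ->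
  (r ^+ m) `^ q = r `^ (m%:R * q).
Proof. by move=> r0; rewrite -powR_mulrn // -powRrM. Qed.

Lemma root_pow (S : R) (m : nat) : 0 < S -> (0 < m)%N ->
  (S `^ (m%:R^-1)) ^+ m = S.
Proof.
move=> S0 m0; rewrite -powR_mulrn ?powR_ge0 // -powRrM mulVf ?powRr1 ?ltW //.
by rewrite pnatr_eq0 -lt0n.
Qed.

Lemma N_to_1 k a b c d (u du v dv : R -> R) : (1 <= k)%N ->
  Nehari k a b c d u du v dv ->
  exists u' du' v' dv', H1 u' du' /\ H1 v' dv' /\ Ptil k a b c d u' v' = 1 /\
    Ifun k a b c d u du v dv =
    k%:R / (2 * k.+1)%:R * (Sfun u' du' v' dv') `^ (k.+1%:R / k%:R).
Proof.
move=> hk [hu [hv [nz [_ d0]]]].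
have [_] := Iray_der k a b c d hu hv; rewrite d0 => /eqP; rewrite eq_sym subr_eq0 => /eqP SJ.
set S := Sfun u du v dv in SJ *; set J := RI _ in SJ *.
have S0 : 0 < S.
  rewrite lt_def S_ge0 andbT; apply/eqP => S0; apply: nz; exact: S_eq0 hu hv S0.
set r := S `^ ((2 * k.+1)%:R^-1).
have r0 : 0 < r by apply: powR_gt0.
have rS : r ^+ (2 * k.+1) = S by apply: root_pow.
exists (fun x => r^-1 * u x), (fun x => r^-1 * du x),
       (fun x => r^-1 * v x), (fun x => r^-1 * dv x).
split; first exact: H1_scale.
split; first exact: H1_scale.
split.
  rewrite /Ptil (@J_scale k a b c d u du v dv _ hu hv) mulrCA -/J -SJ exprVn rS.
  by rewrite mulVf // gt_eqF.
rewrite (S_scale _ hu hv) -/S.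
have e : r^-1 ^+ 2 * S = r ^+ (2 * k).
  rewrite -rS exprVn.
  have -> : (2 * k.+1 = (2 * k).+2)%N by rewrite mulnS.
  rewrite !exprS expr0 mulr1; field; by rewrite gt_eqF.
rewrite e pow_nat_powR ?ltW //.
have -> : (2 * k)%:R * (k.+1%:R / k%:R) = (2 * k.+1)%:R :> R.
  have k0 : k%:R != 0 :> R by rewrite pnatr_eq0 -lt0n.
  rewrite natn2 natrM -[k.+1]addn1 natrD; field; exact: k0.
rewrite powR_mulrn ?ltW // rS /Ifun -/S -/J.
have k0 : k%:R + 1 != 0 :> R by rewrite natr1 pnatr_eq0.
by rewrite SJ natn2; field.
Qed.

Lemma one_to_N k a b c d (u du v dv : R -> R) : (1 <= k)%N ->
  H1 u du -> H1 v dv -> Ptil k a b c d u v = 1 ->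
  exists u' du' v' dv', Nehari k a b c d u' du' v' dv' /\
    Ifun k a b c d u' du' v' dv' =
    k%:R / (2 * k.+1)%:R * (Sfun u du v dv) `^ (k.+1%:R / k%:R).
Proof.
move=> hk hu hv P1.
have [mu1 _] := H1_meas hu; have [mv _] := H1_meas hv.
move: P1; rewrite /Ptil; set J := RI _ => P1.
set S := Sfun u du v dv.
have J0 : J != 0 by apply/eqP => J0; move: P1; rewrite J0 mulr0 => /eqP; rewrite eq_sym oner_eq0.
have S0 : 0 < S.
  rewrite lt_def S_ge0 andbT; apply/eqP => S0; move/eqP: J0; apply.
  exact: ae0_J mu1 mv (S_eq0 hu hv S0).
have k2 : (0 < 2 * k)%N by rewrite muln_gt0.
set t := S `^ ((2 * k)%:R^-1).
have t0 : 0 < t by apply: powR_gt0.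
have tS : t ^+ (2 * k) = S by apply: root_pow.
have tn : t ^+ (2 * k.+1) = t ^+ 2 * S.
  rewrite -tS -exprD; congr (_ ^+ _); by rewrite mulnS.
have hu' := H1_scale t hu; have hv' := H1_scale t hv.
have J' := @J_scale k a b c d u du v dv t hu hv.
have S' := S_scale t hu hv.
exists (fun x => t * u x), (fun x => t * du x),
       (fun x => t * v x), (fun x => t * dv x).
have [der dval] := Iray_der k a b c d hu' hv'.
split.
  split => //; split => //; split.
    move=> hae; move/eqP: J0; apply.
    have := ae0_J k a b c d (mfun_scale t mu1) (mfun_scale t mv) hae.
    rewrite J' -/J => /eqP; rewrite mulf_eq0 expf_eq0 (gt_eqF t0) andbF /=.
    by move/eqP.
  split => //; rewrite dval S' J' -/J -/S mulrCA P1 mulr1 tn.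
  by rewrite subrr.
rewrite /Ifun S' J' -/J -/S -tS pow_nat_powR ?ltW //.
have -> : (2 * k)%:R * (k.+1%:R / k%:R) = (2 * k.+1)%:R :> R.
  have k0 : k%:R != 0 :> R by rewrite pnatr_eq0 -lt0n.
  rewrite natn2 natrM -[k.+1]addn1 natrD; field; exact: k0.
rewrite powR_mulrn ?ltW // tn tS.
have eJ : J = (2 * k.+1)%:R^-1.
  have n0 : (2 * k.+1)%:R != 0 :> R by rewrite pnatr_eq0.
  by apply: (mulfI n0); rewrite P1 mulfV.
have k0 : k%:R + 1 != 0 :> R by rewrite natr1 pnatr_eq0.
by rewrite eJ natn2; field.
Qed.

End Aux.

Theorem lemma5p1 (R : realType) (k : nat) (a b c d : R) :
  (1 <= k)%N -> 0 <= a -> 0 <= b -> 0 <= c -> 0 <= d ->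
  lambda1 k a b c d = (2 * k.+1)%:R / k%:R * omegaN k a b c d.
Proof.
move=> hk _ _ _ _.
set C : R := k%:R / (2 * k.+1)%:R.
set p : R := k.+1%:R / k%:R.
have k0 : k%:R != 0 :> R by rewrite pnatr_eq0 -lt0n.
have Eset : [set s | exists u du v dv, Nehari k a b c d u du v dv /\
         s = Ifun k a b c d u du v dv] =
  (fun x => C * x `^ p) @` [set s | exists u du v dv, H1 u du /\ H1 v dv /\
         Ptil k a b c d u v = 1 /\ s = Sfun u du v dv].
  apply/seteqP; split.
  - move=> _ [u [du [v [dv [hN ->]]]]].
    have [u' [du' [v' [dv' [h1 [h2 [h3 h4]]]]]]] := N_to_1 hk hN.
    exists (Sfun u' du' v' dv'); last by rewrite h4.
    by exists u', du', v', dv'.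
  - move=> _ [_ [u [du [v [dv [h1 [h2 [h3 ->]]]]]]] <-].
    have [u' [du' [v' [dv' [hN hI]]]]] := one_to_N hk h1 h2 h3.
    by exists u', du', v', dv'; rewrite hI.
rewrite /omegaN Eset inf_img.
- rewrite /lambda1 /S1 -/p /C; field.
  by rewrite k0 andbT addrC natr1 pnatr_eq0.
- by rewrite /C divr_gt0 // ltr0n // muln_gt0.
- by rewrite /p divr_gt0 // ltr0n.
- by move=> _ [u [du [v [dv [_ [_ [_ ->]]]]]]]; exact: S_ge0.
Qed.
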